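(* Let $h$ be the height function of a single-species TASEP with arbitrary initial condition, and let $x(\cdot)$ be a backwards path with respect to $h$ started at some time $t$. Let $t_1<t_2$ in $[0,t]$ and $x_1,x_2\in\mathbb{Z}$, and suppose $x(t_1)\ge x_1$ and $x(t_2)\ge x_2$. Let $x^{\mathrm{step},l}(\tau)$, $\tau\in[t_1,t_2]$, be the leftmost backwards path with respect to $h^{\mathrm{step}}_{x_1,t_1}$ starting at time $t_2$ from position $x_2$, all processes being coupled by basic coupling. Then $x(\tau)\ge x^{\mathrm{step},l}(\tau)$ for all $\tau\in[t_1,t_2]$.
   Context: Single-species TASEP (graphical construction): independent rate-one Poisson processes $\mathcal{P}_z$, $z\in\mathbb{Z}$; at each ring of $\mathcal{P}_z$ (a jump attempt at site $z$) a particle at $z$, if any, jumps to $z+1$ if $z+1$ is empty. Basic coupling: several TASEPs are constructed with the same Poisson processes. A height function $h(j,s)$ of a TASEP satisfies $h(j,s)-h(j-1,s)=1-2\eta_s(j)$ ($\eta_s(j)=1$ iff a particle is at $j$), and each jump of a particle from $j$ to $j+1$ at time $s$ increases $h(j,\cdot)$ by $2$ and leaves all other values unchanged. For $y\in\mathbb{Z}$, $\tau\ge0$, $h^{\mathrm{step}}_{y,\tau}$ denotes the height function of the TASEP started at time $\tau$ from particles on all sites $\le y$ and holes on all sites $>y$, normalised by $h^{\mathrm{step}}_{y,\tau}(j,\tau)=|j-y|$. Backwards path with respect to a height function $h$, started at time $t$ from $x(t)=x$: a piecewise constant path defined going backwards in time; it changes only at times $s$ at which there is a jump attempt at site $x(s)$.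 At such a time: if a jump occurred, i.e. $h(x(s),s)=h(x(s),s^-)+2$, set $x(s^-)=x(s)$; otherwise choose $x(s^-)\in\{x(s)-1,x(s)+1\}$ such that $h(x(s^-),s)=h(x(s),s)-1$. The rightmost (resp. leftmost) backwards path always chooses $x(s)+1$ (resp. $x(s)-1$) when this choice is allowed. *)

(* Defs.v *)
From Stdlib Require Import Reals ZArith List.
Open Scope R_scope.

(* Clocks: [P z s] means the Poisson process P_z has a point (a jump attempt
   at site z) at time s.  The statement is pathwise; we assume the almost-sure
   regularity properties of independent rate-one Poisson processes. *)
Definition clocks := Z -> R -> Prop.

Definition clock_regular (P : clocks) : Prop :=
  (forall (z : Z) (a b : R), exists l : list R,
      forall s, a <= s <= b -> P z s -> In s l) /\
  (forall (z z' : Z) (s : R), P z s -> P z' s -> z = z') /\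
  (* on every bounded time window there are arbitrarily far quiet sites on
     both sides (a.s. true; guarantees well-posedness of the construction) *)
  (forall (T : R) (N : Z), exists z1 z2 : Z,
      (z1 <= - N)%Z /\ (N <= z2)%Z /\
      (forall s, 0 <= s <= T -> ~ P z1 s /\ ~ P z2 s)).

(* [LL f s v]: the left limit f(s^-) exists and equals v (f is constant on a
   left neighbourhood of s). *)
Definition LL (f : R -> Z) (s : R) (v : Z) : Prop :=
  exists eps, 0 < eps /\ forall u, s - eps < u < s -> f u = v.

Definition RC (f : R -> Z) (s : R) : Prop :=
  exists eps, 0 < eps /\ forall u, s <= u < s + eps -> f u = f s.

(* [tasep_height P tau0 h]: h(j,s) (for s >= tau0) is the height function of a
   TASEP started at time tau0 and driven by the clocks P (graphical
   construction): h(j,s) - h(j-1,s) = 1 - 2 eta_s(j) with eta in {0,1};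
   h(j,.) is piecewise constant, right-continuous, and at a ring of P_j at
   time s > tau0 it increases by 2 iff the particle at j jumps to j+1
   (eta_{s-}(j) = 1, eta_{s-}(j+1) = 0); otherwise it does not change. *)
Definition tasep_height (P : clocks) (tau0 : R) (h : Z -> R -> Z) : Prop :=
  (forall (j : Z) (s : R), tau0 <= s ->
      (h j s - h (j - 1)%Z s = 1 \/ h j s - h (j - 1)%Z s = -1)%Z) /\
  (forall (j : Z) (s : R), tau0 <= s -> RC (h j) s) /\
  (forall (j : Z) (s : R), tau0 < s ->
      exists a b c : Z,
        LL (h (j - 1)%Z) s a /\ LL (h j) s b /\ LL (h (j + 1)%Z) s c /\
        ((P j s /\ (b - a = -1)%Z /\ (c - b = 1)%Z /\ h j s = (b + 2)%Z) \/
         (~ (P j s /\ (b - a = -1)%Z /\ (c - b = 1)%Z) /\ h j s = b))).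

Definition jump_at (h : Z -> R -> Z) (j : Z) (s : R) : Prop :=
  exists v, LL (h j) s v /\ h j s = (v + 2)%Z.

(* one backward step: y = x(s), ym = x(s^-) *)
Definition bstep_ok (P : clocks) (h : Z -> R -> Z) (s : R) (y ym : Z) : Prop :=
  (~ P y s -> ym = y) /\
  (P y s -> jump_at h y s -> ym = y) /\
  (P y s -> ~ jump_at h y s ->
     (ym = (y - 1)%Z \/ ym = (y + 1)%Z) /\ h ym s = (h y s - 1)%Z).

Definition backwards_path (P : clocks) (h : Z -> R -> Z) (tau0 t : R)
    (x : R -> Z) : Prop :=
  (forall s, tau0 <= s < t -> RC x s) /\
  (forall s, tau0 < s <= t -> exists ym, LL x s ym /\ bstep_ok P h s (x s) ym).

Definition leftmost_backwards_path (P : clocks) (h : Z -> R -> Z) (tau0 t : R)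
    (x : R -> Z) : Prop :=
  backwards_path P h tau0 t x /\
  (forall s ym, tau0 < s <= t -> LL x s ym -> P (x s) s ->
     ~ jump_at h (x s) s -> h (x s - 1)%Z s = (h (x s) s - 1)%Z ->
     ym = (x s - 1)%Z).

Definition step_height_at (P : clocks) (y : Z) (tau : R) (h : Z -> R -> Z) : Prop :=
  tasep_height P tau h /\ (forall j : Z, h j tau = Z.abs (j - y)).

(* Main.v *)
Require Import Defs.
From Stdlib Require Import Reals ZArith Lra Lia Classical IndefiniteDescription.
Open Scope R_scope.

Definition Wl (s : R) (Q : R -> Prop) :=
  exists eps, 0 < eps /\ forall u, s - eps < u < s -> Q u.
Definition Wr (s : R) (Q : R -> Prop) :=
  exists eps, 0 < eps /\ forall u, s <= u < s + eps -> Q u.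

Lemma Wl_and s Q1 Q2 : Wl s Q1 -> Wl s Q2 -> Wl s (fun u => Q1 u /\ Q2 u).
Proof.
  intros [e1 [He1 H1]] [e2 [He2 H2]]. exists (Rmin e1 e2). split.
  - apply Rmin_pos; lra.
  - intros u Hu. pose proof (Rmin_l e1 e2). pose proof (Rmin_r e1 e2).
    split; [apply H1|apply H2]; lra.
Qed.

Lemma Wr_and s Q1 Q2 : Wr s Q1 -> Wr s Q2 -> Wr s (fun u => Q1 u /\ Q2 u).
Proof.
  intros [e1 [He1 H1]] [e2 [He2 H2]]. exists (Rmin e1 e2). split.
  - apply Rmin_pos; lra.
  - intros u Hu. pose proof (Rmin_l e1 e2). pose proof (Rmin_r e1 e2).
    split; [apply H1|apply H2]; lra.
Qed.

Lemma Wl_imp s (Q1 Q2 : R -> Prop) : (forall u, Q1 u -> Q2 u) -> Wl s Q1 -> Wl s Q2.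
Proof. intros H [e [He H1]]. exists e. split; auto. Qed.

Lemma Wr_imp s (Q1 Q2 : R -> Prop) : (forall u, Q1 u -> Q2 u) -> Wr s Q1 -> Wr s Q2.
Proof. intros H [e [He H1]]. exists e. split; auto. Qed.

Lemma Wl_pick s Q lo : Wl s Q -> lo < s -> exists u, lo <= u < s /\ Q u.
Proof.
  intros [e [He H]] Hlo. exists (Rmax lo (s - e/2)).
  pose proof (Rmax_l lo (s - e/2)). pose proof (Rmax_r lo (s - e/2)).
  destruct (Rmax_Rle lo (s-e/2) (Rmax lo (s - e/2))) as [H3 _].
  assert (Rmax lo (s - e/2) = lo \/ Rmax lo (s - e/2) = s - e/2).
  { unfold Rmax; destruct (Rle_dec lo (s - e/2)); auto. }
  split; [|apply H]; destruct H2; lra.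
Qed.

Lemma LL_unique f s v w : LL f s v -> LL f s w -> v = w.
Proof.
  intros H1 H2. destruct (Wl_pick s _ (s - 1) (Wl_and _ _ _ H1 H2)) as [u [_ [A B]]].
  lra. congruence.
Qed.

Lemma cont_ind (a b : R) (Q : R -> Prop) :
  a <= b -> Q a ->
  (forall c, a <= c < b -> Q c -> exists eps, 0 < eps /\ forall u, c <= u < c + eps -> Q u) ->
  (forall c, a < c <= b -> (forall u, a <= u < c -> Q u) -> Q c) ->
  forall u, a <= u <= b -> Q u.
Proof.
  intros Hab Qa Hr Hl.
  set (S := fun u => a <= u <= b /\ forall v, a <= v <= u -> Q v).
  assert (Hb : bound S) by (exists b; intros u [Hu _]; lra).
  assert (Sa : S a).
  { split; [lra|]. intros v Hv. replace v with a by lra. auto. }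
  assert (He : exists u, S u) by (exists a; auto).
  destruct (completeness S Hb He) as [m [Hub Hlub]].
  assert (Ham : a <= m) by (apply Hub; auto).
  assert (Hmb : m <= b) by (apply Hlub; intros u [Hu _]; lra).
  assert (Hbelow : forall v, a <= v < m -> Q v).
  { intros v Hv. destruct (classic (exists w, S w /\ v <= w)) as [[w [[Hw1 Hw2] Hvw]] | Hn].
    - apply Hw2; lra.
    - exfalso. assert (m <= v).
      { apply Hlub. intros w Sw. destruct (Rle_or_lt w v); auto.
        exfalso; apply Hn; exists w; split; auto; lra. }
      lra. }
  assert (Qm : forall v, a <= v <= m -> Q v).
  { intros v Hv. destruct (Rle_lt_or_eq_dec v m) as [Hlt|Heq]; [lra| apply Hbelow; lra|].
    subst v. destruct (Rle_lt_or_eq_dec a m Ham) as [Hlt|Heq].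
    - apply Hl; [lra|]. auto.
    - subst; auto. }
  destruct (Rle_lt_or_eq_dec m b Hmb) as [Hlt|Heq].
  - exfalso. destruct (Hr m (conj Ham Hlt) (Qm m (conj Ham (Rle_refl m)))) as [eps [Heps Hq]].
    pose proof (Rmin_l (m + eps/2) b). pose proof (Rmin_r (m + eps/2) b).
    set (w := Rmin (m + eps/2) b) in *.
    assert (w = m + eps/2 \/ w = b).
    { unfold w, Rmin; destruct (Rle_dec (m + eps/2) b); auto. }
    assert (Sw : S w).
    { split; [lra|]. intros v Hv. destruct (Rle_or_lt v m).
      - apply Qm; lra.
      - apply Hq. lra. }
    pose proof (Hub w Sw). destruct H1; lra.
  - subst; intros u Hu; apply Qm; lra.
Qed.

Open Scope Z_scope.

Record local_facts (p : Z -> Prop) (H Hm : Z -> Z) : Prop := {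
  lf1 : forall j, H j = Hm j \/ H j = Hm j + 2;
  lf2 : forall j jm jp, jm = j - 1 -> jp = j + 1 -> H j = Hm j + 2 ->
        p j /\ Hm j - Hm jm = -1 /\ Hm jp - Hm j = 1;
  lf3 : forall j jm jp, jm = j - 1 -> jp = j + 1 -> p j ->
        Hm j - Hm jm = -1 -> Hm jp - Hm j = 1 -> H j = Hm j + 2;
  lf4 : forall j, ~ p j -> H j = Hm j;
  lf5 : forall j jp, jp = j + 1 -> H jp - H j = 1 \/ H jp - H j = -1 }.

Definition path_facts (p : Z -> Prop) (H Hm : Z -> Z) (y ym : Z) :=
  (~ p y -> ym = y) /\ (p y -> H y = Hm y + 2 -> ym = y) /\
  (p y -> H y <> Hm y + 2 -> (ym = y - 1 \/ ym = y + 1) /\ H ym = H y - 1).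

Definition clockp (p : Z -> Prop) := forall j k, p j -> p k -> j = k.

Lemma step_local p H Hm K Km y ym :
  local_facts p H Hm -> local_facts p K Km -> clockp p ->
  path_facts p H Hm y ym -> H y - K y >= Hm ym - Km ym.
Proof.
  intros [h1 h2 h3 h4 h5] [k1 k2 k3 k4 k5] cl [p1 [p2 p3]].
  destruct (classic (p y)) as [py|npy].
  - destruct (Z.eq_dec (H y) (Hm y + 2)) as [e|ne].
    + rewrite (p2 py e). destruct (k1 y); lia.
    + destruct (p3 py ne) as [[E|E] Hym]; subst ym.
      * assert (np : ~ p (y-1)) by (intro q; specialize (cl _ _ q py); lia).
        rewrite <- (h4 _ np), <- (k4 _ np). pose proof (k5 (y-1) y ltac:(lia)). lia.
      * assert (np : ~ p (y+1)) by (intro q; specialize (cl _ _ q py); lia).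
        rewrite <- (h4 _ np), <- (k4 _ np). pose proof (k5 y (y+1) ltac:(lia)). lia.
  - rewrite (p1 npy). rewrite (h4 _ npy), (k4 _ npy). lia.
Qed.

Lemma fwd_cross p H Hm K Km y ym y' ym' :
  local_facts p H Hm -> local_facts p K Km -> clockp p ->
  path_facts p H Hm y ym -> path_facts p K Km y' ym' ->
  ym >= ym' -> y < y' -> (H y' - K y') - (H y - K y) <= 0.
Proof.
  intros [h1 h2 h3 h4 h5] [k1 k2 k3 k4 k5] cl [p1 [p2 p3]] [q1 [q2 q3]] Hge Hlt.
  destruct (classic (p y)) as [py|npy]; destruct (classic (p y')) as [py'|npy'].
  - specialize (cl _ _ py py'). lia.
  - specialize (q1 npy').
    destruct (Z.eq_dec (H y) (Hm y + 2)) as [e|ne].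
    + specialize (p2 py e). lia.
    + destruct (p3 py ne) as [[E|E] Hym]; [lia|].
      assert (y' = y + 1) by lia. subst ym'. subst y'. subst ym.
      pose proof (k5 y (y+1) eq_refl). lia.
  - specialize (p1 npy).
    destruct (Z.eq_dec (K y') (Km y' + 2)) as [e|ne].
    + specialize (q2 py' e). lia.
    + destruct (q3 py' ne) as [[E|E] Hym]; [|lia].
      assert (y' = y + 1) by lia. subst y' ym'.
      pose proof (h5 y (y+1) eq_refl).
      replace (y + 1 - 1) with y in Hym by ring. lia.
  - specialize (p1 npy). specialize (q1 npy'). lia.
Qed.

Lemma bwd_cross p H Hm K Km y ym y' ym' :
  local_facts p H Hm -> local_facts p K Km -> clockp p ->
  path_facts p H Hm y ym -> path_facts p K Km y' ym' ->
  (p y' -> K y' <> Km y' + 2 -> K (y' - 1) = K y' - 1 -> ym' = y' - 1) ->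
  ym < ym' -> y >= y' -> (Hm ym' - Km ym') - (Hm ym - Km ym) > 0.
Proof.
  intros LH LK cl [p1 [p2 p3]] [q1 [q2 q3]] lm Hlt Hge.
  destruct LH as [h1 h2 h3 h4 h5]; destruct LK as [k1 k2 k3 k4 k5].
  assert (Hy : y' = y /\ p y).
  { destruct (classic (p y)) as [py|npy]; destruct (classic (p y')) as [py'|npy'].
    - specialize (cl _ _ py py'). split; auto.
    - specialize (q1 npy').
      destruct (Z.eq_dec (H y) (Hm y + 2)) as [e|ne].
      + specialize (p2 py e). lia.
      + destruct (p3 py ne) as [[E|E] Hym]; [|lia].
        assert (Ey : y' = y) by lia. rewrite Ey in npy'. contradiction.
    - specialize (p1 npy).
      destruct (Z.eq_dec (K y') (Km y' + 2)) as [e|ne].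
      + specialize (q2 py' e). lia.
      + destruct (q3 py' ne) as [[E|E] Hym]; [lia|].
        assert (Ey : y' = y) by lia. rewrite Ey in py'. contradiction.
    - specialize (p1 npy). specialize (q1 npy'). lia. }
  destruct Hy as [Hy py]. subst y'.
  assert (np1 : ~ p (y+1)) by (intro q; specialize (cl _ _ q py); lia).
  assert (np0 : ~ p (y-1)) by (intro q; specialize (cl _ _ q py); lia).
  destruct (Z.eq_dec (H y) (Hm y + 2)) as [e|ne].
  - specialize (p2 py e). subst ym.
    destruct (h2 y (y-1) (y+1) eq_refl eq_refl e) as [_ [A B]].
    destruct (Z.eq_dec (K y) (Km y + 2)) as [e'|ne'].
    + specialize (q2 py e'). lia.
    + destruct (q3 py ne') as [[E|E] Hym]; [lia|]. subst ym'.
      assert (K y = Km y) by (destruct (k1 y); lia).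
      pose proof (h4 _ np1). pose proof (k4 _ np1). lia.
  - destruct (p3 py ne) as [E Hym].
    assert (H y = Hm y) by (destruct (h1 y); lia).
    assert (ym' = y \/ ym' = y - 1 \/ ym' = y + 1).
    { destruct (Z.eq_dec (K y) (Km y + 2)) as [e'|ne'].
      - left; apply q2; auto.
      - destruct (q3 py ne') as [[E'|E'] _]; lia. }
    assert (ym = y - 1) by lia. subst ym.
    pose proof (h4 _ np0). pose proof (k4 _ np0).
    destruct (Z.eq_dec (K y) (Km y + 2)) as [e'|ne'].
    + specialize (q2 py e'). subst ym'.
      destruct (k2 y (y-1) (y+1) eq_refl eq_refl e') as [_ [A B]]. lia.
    + destruct (q3 py ne') as [[E'|E'] Hym']; [lia|]. subst ym'.
      assert (K y = Km y) by (destruct (k1 y); lia).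
      assert (K (y-1) <> K y - 1) by (intro C; specialize (lm py ne' C); lia).
      pose proof (k5 (y-1) y ltac:(lia)).
      pose proof (h5 y (y+1) eq_refl).
      pose proof (h4 _ np1). pose proof (k4 _ np1). lia.
Qed.

Lemma lip_le (f : Z -> Z) : (forall j, f (j+1) - f j <= 1) ->
  forall a b, a <= b -> f b - f a <= b - a.
Proof.
  intros Hf a b Hab.
  assert (forall n : nat, f (a + Z.of_nat n) - f a <= Z.of_nat n).
  { induction n. - simpl. rewrite Z.add_0_r. lia.
    - rewrite Nat2Z.inj_succ. specialize (Hf (a + Z.of_nat n)).
      replace (a + Z.succ (Z.of_nat n)) with (a + Z.of_nat n + 1) by lia. lia. }
  specialize (H (Z.to_nat (b - a))). rewrite Z2Nat.id in H by lia.
  replace (a + (b - a)) with b in H by ring. exact H.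
Qed.

Close Scope Z_scope.

Lemma tasep_local P tau0 h c : tasep_height P tau0 h -> tau0 < c ->
  exists hm : Z -> Z, (forall j, LL (h j) c (hm j)) /\
    local_facts (fun j => P j c) (fun j => h j c) hm.
Proof.
  intros [T1 [T2 T3]] Hc.
  assert (Hex : forall j, exists v, LL (h j) c v).
  { intro j. destruct (T3 j c Hc) as [a [b [c' [_ [Hb _]]]]]. eauto. }
  exists (fun j => proj1_sig (constructive_indefinite_description _ (Hex j))).
  set (hm := fun j => proj1_sig (constructive_indefinite_description _ (Hex j))).
  assert (Hhm : forall j, LL (h j) c (hm j)).
  { intro j. unfold hm. exact (proj2_sig (constructive_indefinite_description _ (Hex j))). }
  split; [exact Hhm|].
  assert (Key : forall j, (P j c /\ hm j - hm (j-1) = -1 /\ hm (j+1) - hm j = 1 /\ h j c = hm j + 2)%Z \/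
     (~ (P j c /\ hm j - hm (j-1) = -1 /\ hm (j+1) - hm j = 1) /\ h j c = hm j)%Z).
  { intro j. destruct (T3 j c Hc) as [a [b [c' [Ha [Hb [Hc' Hcase]]]]]].
    rewrite <- (LL_unique _ _ _ _ Ha (Hhm _)), <- (LL_unique _ _ _ _ Hb (Hhm _)),
      <- (LL_unique _ _ _ _ Hc' (Hhm _)). exact Hcase. }
  constructor.
  - intro j. destruct (Key j) as [[_ [_ [_ E]]]|[_ E]]; auto.
  - intros j jm jp -> -> E. destruct (Key j) as [[A [B [C D]]]|[_ D]]; auto. lia.
  - intros j jm jp -> -> A B C. destruct (Key j) as [[_ [_ [_ D]]]|[N D]]; auto.
    exfalso; apply N; auto.
  - intros j N. destruct (Key j) as [[A _]|[_ D]]; auto. contradiction.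
  - intros j jp ->. pose proof (T1 (j+1)%Z c ltac:(lra)).
    replace (j + 1 - 1)%Z with j in H by ring. exact H.
Qed.

Lemma jump_iff h hm j c : (forall j, LL (h j) c (hm j)) ->
  (jump_at h j c <-> h j c = (hm j + 2)%Z).
Proof.
  intros Hhm. split.
  - intros [v [Hv E]]. rewrite (LL_unique _ _ _ _ (Hhm j) Hv). auto.
  - intros E. exists (hm j). auto.
Qed.

Lemma path_of_bstep P h hm c y ym : (forall j, LL (h j) c (hm j)) ->
  bstep_ok P h c y ym -> path_facts (fun j => P j c) (fun j => h j c) hm y ym.
Proof.
  intros Hhm [b1 [b2 b3]]. split; [|split]; auto.
  - intros p E. apply b2; auto. apply (jump_iff h hm); auto.
  - intros p E. apply b3; auto. rewrite (jump_iff h hm); auto.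
Qed.

Definition gfun (h hs : Z -> R -> Z) (x xl : R -> Z) (u : R) : Z :=
  ((h (xl u) u - hs (xl u) u) - (h (x u) u - hs (x u) u))%Z.

Theorem proposition2p2 :
  forall (P : clocks), clock_regular P ->
  forall (h : Z -> R -> Z), tasep_height P 0 h ->
  forall (t : R) (x : R -> Z), backwards_path P h 0 t x ->
  forall (t1 t2 : R) (x1 x2 : Z),
    0 <= t1 -> t1 < t2 -> t2 <= t ->
    (x t1 >= x1)%Z -> (x t2 >= x2)%Z ->
  forall (hs : Z -> R -> Z), step_height_at P x1 t1 hs ->
  forall (xl : R -> Z), leftmost_backwards_path P hs t1 t2 xl -> xl t2 = x2 ->
  forall tau : R, t1 <= tau <= t2 -> (x tau >= xl tau)%Z.
Proof.
  intros P [_ [Pcl _]] h Th t x [Xrc Xll] t1 t2 x1 x2 Ht1 Ht12 Ht2t Hx1 Hx2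
    hs [Ths Hs0] xl [[Lrc Lll] Llm] Hxl2 tau Htau.
  set (g := gfun h hs x xl).
  assert (Freeze : forall c, t1 <= c < t2 ->
     Wr c (fun u => x u = x c /\ xl u = xl c /\ g u = g c)).
  { intros c Hc.
    destruct Th as [_ [hrc _]]. destruct Ths as [_ [hsrc _]].
    pose proof (Wr_and _ _ _ (Xrc c ltac:(lra)) (Lrc c ltac:(lra))) as W.
    pose proof (Wr_and _ _ _ W (Wr_and _ _ _ (hrc (x c) c ltac:(lra)) (hsrc (x c) c ltac:(lra)))) as W2.
    pose proof (Wr_and _ _ _ W2 (Wr_and _ _ _ (hrc (xl c) c ltac:(lra)) (hsrc (xl c) c ltac:(lra)))) as W3.
    revert W3. apply Wr_imp. intros u [[[A B] [C D]] [E F]].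
    split; auto. split; auto. unfold g, gfun. rewrite A, B. lia. }
  assert (Left : forall c, t1 < c <= t2 -> exists xm xlm hm hsm,
     LL x c xm /\ LL xl c xlm /\
     local_facts (fun j => P j c) (fun j => h j c) hm /\
     local_facts (fun j => P j c) (fun j => hs j c) hsm /\
     path_facts (fun j => P j c) (fun j => h j c) hm (x c) xm /\
     path_facts (fun j => P j c) (fun j => hs j c) hsm (xl c) xlm /\
     (P (xl c) c -> hs (xl c) c <> (hsm (xl c) + 2)%Z ->
        hs (xl c - 1)%Z c = (hs (xl c) c - 1)%Z -> xlm = (xl c - 1)%Z) /\
     Wl c (fun u => x u = xm /\ xl u = xlm /\
        g u = ((hm xlm - hsm xlm) - (hm xm - hsm xm))%Z)).
  { intros c Hc.
    destruct (tasep_local P 0 h c Th ltac:(lra)) as [hm [Hhm LH]].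
    destruct (tasep_local P t1 hs c Ths ltac:(lra)) as [hsm [Hhsm LHs]].
    destruct (Xll c ltac:(lra)) as [xm [Hxm Bx]].
    destruct (Lll c ltac:(lra)) as [xlm [Hxlm Bxl]].
    exists xm, xlm, hm, hsm.
    split; [auto|]. split; [auto|]. split; [auto|]. split; [auto|].
    split; [eapply path_of_bstep; eauto|].
    split; [eapply path_of_bstep; eauto|].
    split.
    { intros A B C. apply (Llm c xlm); auto. rewrite (jump_iff hs hsm); auto. }
    pose proof (Wl_and _ _ _ Hxm Hxlm) as W.
    pose proof (Wl_and _ _ _ W (Wl_and _ _ _ (Hhm xm) (Hhsm xm))) as W2.
    pose proof (Wl_and _ _ _ W2 (Wl_and _ _ _ (Hhm xlm) (Hhsm xlm))) as W3.
    revert W3. apply Wl_imp. intros u [[[A B] [C D]] [E F]].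
    split; auto. split; auto. unfold g, gfun. rewrite A, B. lia. }
  assert (Hcl : forall c, clockp (fun j => P j c)).
  { intros c j k A B. eapply Pcl; eauto. }
  assert (Inv : forall u, t1 <= u <= t2 -> (x u < xl u)%Z -> (g u <= 0)%Z).
  { apply (cont_ind t1 t2 (fun u => (x u < xl u)%Z -> (g u <= 0)%Z)).
    - lra.
    - intros Hlt. unfold g, gfun. rewrite !Hs0.
      destruct Th as [T1 _].
      assert (Hf : forall j, (h (j+1)%Z t1 - h j t1 <= 1)%Z).
      { intro j. pose proof (T1 (j+1)%Z t1 Ht1). replace (j + 1 - 1)%Z with j in H by ring. lia. }
      pose proof (lip_le (fun j => h j t1) Hf (x t1) (xl t1) ltac:(lia)).
      rewrite !Z.abs_eq by lia. simpl in H. lia.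
    - intros c Hc Ic. destruct (Freeze c Hc) as [e [He Hq]]. exists e. split; auto.
      intros u Hu. destruct (Hq u Hu) as [A [B C]]. rewrite A, B, C. auto.
    - intros c Hc Ib Hlt.
      destruct (Left c Hc) as [xm [xlm [hm [hsm [_ [_ [LH [LHs [PFx [PFxl [_ W]]]]]]]]]]].
      destruct (Wl_pick _ _ t1 W ltac:(lra)) as [u [Hu [A [B C]]]].
      destruct (Z_lt_ge_dec xm xlm) as [Lt|Ge].
      + assert (g u <= 0)%Z by (apply Ib; [lra| lia]).
        pose proof (step_local _ _ _ _ _ _ _ LH LHs (Hcl c) PFx).
        pose proof (step_local _ _ _ _ _ _ _ LHs LH (Hcl c) PFxl).
        unfold g, gfun in *. lia.
      + pose proof (fwd_cross _ _ _ _ _ _ _ _ _ LH LHs (Hcl c) PFx PFxl Ge Hlt).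
        unfold g, gfun. lia. }
  destruct (Z_lt_ge_dec (x tau) (xl tau)) as [Bad|Good]; [|exact Good].
  exfalso.
  assert (M : forall u, tau <= u <= t2 -> (x u < xl u)%Z).
  { apply (cont_ind tau t2 (fun u => (x u < xl u)%Z)).
    - lra.
    - exact Bad.
    - intros c Hc Mc. destruct (Freeze c ltac:(lra)) as [e [He Hq]]. exists e. split; auto.
      intros u Hu. destruct (Hq u Hu) as [A [B C]]. rewrite A, B. auto.
    - intros c Hc Mb.
      destruct (Left c ltac:(lra)) as [xm [xlm [hm [hsm [_ [_ [LH [LHs [PFx [PFxl [Lm W]]]]]]]]]]].
      destruct (Wl_pick _ _ tau W ltac:(lra)) as [u [Hu [A [B C]]]].
      assert (Lt : (xm < xlm)%Z) by (rewrite <- A, <- B; apply Mb; lra).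
      assert (Gle : (g u <= 0)%Z) by (apply Inv; [lra| lia]).
      destruct (Z_lt_ge_dec (x c) (xl c)) as [OK|Ge]; [exact OK|].
      exfalso.
      pose proof (bwd_cross _ _ _ _ _ _ _ _ _ LH LHs (Hcl c) PFx PFxl Lm Lt Ge).
      lia. }
  specialize (M t2 ltac:(lra)). lia.
Qed.
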